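(* Let $\mathcal H$ be a finite-dimensional complex Hilbert space and $\mathcal G$ a finite set of Hermitian operators on $\mathcal H$. Let $\Pi_{\mathcal Z}$ denote the orthogonal projection (with respect to the Hilbert–Schmidt inner product $\mathrm{tr}(O_1^\dagger O_2)$ on $\mathrm{End}(\mathcal H)$) onto the center $\mathcal Z_{\mathcal G}$. Then $$\Pi_{\mathcal Z}(\mathfrak L(\mathcal G))=\mathrm{span}\big(\Pi_{\mathcal Z}(\mathcal G)\big).$$
   Context: $\mathfrak L(\mathcal G)$ is the dynamical Lie algebra: the complex linear span of $\mathcal G$ and all nested commutators $[h_{\alpha_1},[h_{\alpha_2},\dots,[h_{\alpha_{n-1}},h_{\alpha_n}]\dots]]$ with $h_{\alpha_i}\in\mathcal G$. The bond algebra $\mathcal A_{\mathcal G}$ is the von Neumann algebra generated by $\mathcal G$ (with identity, closed under complex linear combinations, products and adjoints), the commutant is $\mathcal C_{\mathcal G}=\{Q:[Q,h]=0\ \forall h\in\mathcal G\}$, and the center is $\mathcal Z_{\mathcal G}=\mathcal A_{\mathcal G}\cap\mathcal C_{\mathcal G}$. *)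

(* Defs.v *)
(* Operators on an n-dimensional complex Hilbert space are
   n x n matrices over a numClosedFieldType C (C has a complex conjugation). *)
From mathcomp Require Import all_boot all_order all_algebra.
Set Implicit Arguments. Unset Strict Implicit. Unset Printing Implicit Defensive.
Import Order.TTheory GRing.Theory Num.Theory.
Local Open Scope ring_scope.

Section Defs.
Variables (C : numClosedFieldType) (n : nat).
Notation M := 'M[C]_n.

Definition adjmx (A : M) : M := (map_mx Num.conj A)^T.
Definition is_hermitian (A : M) : Prop := adjmx A = A.

Definition commr (A B : M) : M := A *m B - B *m A.

Definition hs (A B : M) : C := \tr (adjmx A *m B).

Definition lin_span (S : M -> Prop) (X : M) : Prop :=
  exists (k : nat) (c : 'I_k -> C) (Y : 'I_k -> M),
    (forall i, S (Y i)) /\ X = \sum_(i < k) c i *: Y i.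

Inductive nested_comm (G : seq M) : M -> Prop :=
| nc_base h : h \in G -> nested_comm G h
| nc_step h X : h \in G -> nested_comm G X -> nested_comm G (commr h X).

Definition dla (G : seq M) : M -> Prop := lin_span (nested_comm G).

(* bond algebra: the unital *-algebra generated by G (finite dimension, so
   the von Neumann algebra generated by G). *)
Inductive bond_alg (G : seq M) : M -> Prop :=
| ba_gen h : h \in G -> bond_alg G h
| ba_one : bond_alg G 1%:M
| ba_add A B : bond_alg G A -> bond_alg G B -> bond_alg G (A + B)
| ba_scale (c : C) A : bond_alg G A -> bond_alg G (c *: A)
| ba_mul A B : bond_alg G A -> bond_alg G B -> bond_alg G (A *m B)
| ba_adj A : bond_alg G A -> bond_alg G (adjmx A).

Definition commutant (G : seq M) (Q : M) : Prop :=
  forall h, h \in G -> commr Q h = 0.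

Definition center_set (G : seq M) (Q : M) : Prop := bond_alg G Q /\ commutant G Q.

Definition orth_proj (Z : M -> Prop) (P : M -> M) : Prop :=
  forall X, Z (P X) /\ (forall Y, Z Y -> hs (X - P X) Y = 0).

End Defs.

(* Main.v *)
Require Import Defs.
From mathcomp Require Import all_boot all_order all_algebra.
Import GRing.Theory Num.Theory.
Local Open Scope ring_scope.
Set Implicit Arguments. Unset Strict Implicit.

Section Aux.
Variables (C : numClosedFieldType) (n : nat).
Notation M := 'M[C]_n.

Lemma adjmxD (A B : M) : adjmx (A + B) = adjmx A + adjmx B.
Proof. by rewrite /adjmx map_mxD linearD. Qed.

Lemma adjmxZ (a : C) (A : M) : adjmx (a *: A) = a^* *: adjmx A.
Proof. by rewrite /adjmx map_mxZ linearZ. Qed.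

Lemma adjmxN (A : M) : adjmx (- A) = - adjmx A.
Proof. by rewrite /adjmx map_mxN linearN. Qed.

Lemma adjmxM (A B : M) : adjmx (A *m B) = adjmx B *m adjmx A.
Proof. by rewrite /adjmx map_mxM trmx_mul. Qed.

Lemma hsDl (A B W : M) : hs (A + B) W = hs A W + hs B W.
Proof. by rewrite /hs adjmxD mulmxDl mxtraceD. Qed.

Lemma hsNl (A W : M) : hs (- A) W = - hs A W.
Proof. by rewrite /hs adjmxN mulNmx (raddfN (@mxtrace _ _)). Qed.

Lemma hsBl (A B W : M) : hs (A - B) W = hs A W - hs B W.
Proof. by rewrite hsDl hsNl. Qed.

Lemma hsZl (a : C) (A W : M) : hs (a *: A) W = a^* * hs A W.
Proof. by rewrite /hs adjmxZ -scalemxAl mxtraceZ. Qed.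

Lemma hs_eq0 (A : M) : hs A A = 0 -> A = 0.
Proof.
rewrite /hs /mxtrace => H.
have H1 : \sum_i \sum_j `|A j i| ^+ 2 = \sum_i (adjmx A *m A) i i.
  apply: eq_bigr => i _; rewrite !mxE; apply: eq_bigr => j _.
  by rewrite !mxE normCKC.
rewrite H in H1.
apply/matrixP => j i; rewrite mxE.
have H2 : \sum_j `|A j i| ^+ 2 = 0.
  by apply: (psumr_eq0P _ H1) => // k _; apply: sumr_ge0 => l _; apply: exprn_ge0.
have H3 : `|A j i| ^+ 2 = 0.
  by apply: (psumr_eq0P _ H2) => // k _; apply: exprn_ge0.
by move/eqP: H3; rewrite sqrf_eq0 normr_eq0 => /eqP.
Qed.

Lemma center_add (G : seq M) A B :
  center_set G A -> center_set G B -> center_set G (A + B).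
Proof.
move=> [bA cA] [bB cB]; split; first exact: ba_add.
move=> h hG; rewrite /commr mulmxDl mulmxDr.
have := cA h hG; have := cB h hG; rewrite /commr => /eqP; rewrite subr_eq0 => /eqP ->.
by move/eqP; rewrite subr_eq0 => /eqP ->; rewrite subrr.
Qed.

Lemma center_scale (G : seq M) (a : C) A :
  center_set G A -> center_set G (a *: A).
Proof.
move=> [bA cA]; split; first exact: ba_scale.
move=> h hG; rewrite /commr -scalemxAl -scalemxAr -scalerBr.
by have := cA h hG; rewrite /commr => ->; rewrite scaler0.
Qed.

Lemma center_sub (G : seq M) A B :
  center_set G A -> center_set G B -> center_set G (A - B).
Proof.
move=> cA cB; apply: center_add => //.
by rewrite -scaleN1r; apply: center_scale.
Qed.

Lemma proj_uniq (G : seq M) P X a :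
  orth_proj (center_set G) P -> center_set G a ->
  (forall Y, center_set G Y -> hs (X - a) Y = 0) -> P X = a.
Proof.
move=> oP ca ha; have [cP hP] := oP X.
have cd : center_set G (a - P X) by apply: center_sub.
have E : a - P X = (X - P X) - (X - a) by rewrite opprB [RHS]addrC -addrA addKr.
have : hs (a - P X) (a - P X) = 0.
  by rewrite {1}E hsBl (hP _ cd) (ha _ cd) subrr.
by move/hs_eq0/eqP; rewrite subr_eq0 => /eqP.
Qed.

Lemma projD (G : seq M) P X Y : orth_proj (center_set G) P ->
  P (X + Y) = P X + P Y.
Proof.
move=> oP; apply: (proj_uniq oP).
  by apply: center_add; [case: (oP X) | case: (oP Y)].
move=> W cW; have E : X + Y - (P X + P Y) = (X - P X) + (Y - P Y).
  by rewrite opprD addrACA.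
by rewrite E hsDl (proj2 (oP X)) // (proj2 (oP Y)) // addr0.
Qed.

Lemma projZ (G : seq M) P (c : C) X : orth_proj (center_set G) P ->
  P (c *: X) = c *: P X.
Proof.
move=> oP; apply: (proj_uniq oP).
  by apply: center_scale; case: (oP X).
move=> W cW; by rewrite -scalerBr hsZl (proj2 (oP X)) // mulr0.
Qed.

Lemma proj0 (G : seq M) P : orth_proj (center_set G) P -> P 0 = 0.
Proof. by move=> oP; rewrite -(scale0r (0 : M)) (projZ _ _ oP) !scale0r. Qed.

Lemma trcomm (A h D : M) :
  \tr (A *m h *m D) - \tr (h *m A *m D) = \tr (A *m (h *m D - D *m h)).
Proof.
have e1 : \tr (h *m A *m D) = \tr (A *m (D *m h)).
  by rewrite mxtrace_mulC !mulmxA mxtrace_mulC mulmxA.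
by rewrite e1 mulmxBr (raddfB (@mxtrace _ _)) -!mulmxA.
Qed.

Lemma proj_comm (G : seq M) P h X : orth_proj (center_set G) P ->
  h \in G -> is_hermitian h -> P (commr h X) = 0.
Proof.
move=> oP hG hh; have [[bD cD] hP] := oP (commr h X).
set D := P _ in bD cD hP *.
have h1 : hs (commr h X) D = 0.
  rewrite /hs /commr adjmxD adjmxN !adjmxM hh mulmxDl mulNmx mxtraceD (raddfN (@mxtrace _ _)).
  apply: (etrans (trcomm _ _ _)).
  have := cD h hG; rewrite /commr => /eqP; rewrite subr_eq0 => /eqP ->.
  by rewrite subrr mulmx0 mxtrace0.
have : hs D D = 0.
  have E : D = commr h X - (commr h X - D) by rewrite opprB addrC addrNK.
  by rewrite {1}E hsBl h1 (hP D (conj bD cD)) subrr.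
exact: hs_eq0.
Qed.

Lemma ls0 (S : M -> Prop) : lin_span S 0.
Proof.
exists 0%N, (fun _ => 0), (fun _ => 0); split; first by case.
by rewrite big_ord0.
Qed.

Lemma ls1 (S : M -> Prop) c x : S x -> lin_span S (c *: x).
Proof. by move=> Sx; exists 1%N, (fun _ => c), (fun _ => x); rewrite big_ord1. Qed.

Lemma lsD (S : M -> Prop) x y : lin_span S x -> lin_span S y -> lin_span S (x + y).
Proof.
move=> [k1 [c1 [Y1 [S1 ->]]]] [k2 [c2 [Y2 [S2 ->]]]].
exists (k1 + k2)%N, (fun i => match split i with inl j => c1 j | inr j => c2 j end),
  (fun i => match split i with inl j => Y1 j | inr j => Y2 j end); split.
  by move=> i; case: (split i).
rewrite big_split_ord /=; congr (_ + _); apply: eq_bigr => i _.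
  by rewrite (unsplitK (inl i)).
by rewrite (unsplitK (inr i)).
Qed.

Lemma lsZ (S : M -> Prop) a x : lin_span S x -> lin_span S (a *: x).
Proof.
move=> [k [c [Y [SY ->]]]]; exists k, (fun i => a * c i), Y; split => //.
by rewrite scaler_sumr; apply: eq_bigr => i _; rewrite scalerA.
Qed.

End Aux.

Theorem lemma5 (C : numClosedFieldType) (n : nat) (G : seq 'M[C]_n)
    (P : 'M[C]_n -> 'M[C]_n) :
  (forall h, h \in G -> is_hermitian h) ->
  orth_proj (center_set G) P ->
  forall X : 'M[C]_n,
    (exists Y, dla G Y /\ X = P Y) <->
    lin_span (fun Z => exists2 h, h \in G & Z = P h) X.
Proof.
move=> Gh oP X; split.
  move=> [Y [[k [c [Z [NZ ->]]]] ->]].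
  apply: (big_ind (fun Y => lin_span _ (P Y))).
  - by rewrite (proj0 oP); apply: ls0.
  - by move=> a b la lb; rewrite (projD _ _ oP); apply: lsD.
  move=> i _; rewrite (projZ _ _ oP); case: (NZ i) => [h hG|h W hG _].
    by apply: ls1; exists h.
  by rewrite (proj_comm _ oP hG (Gh h hG)) scaler0; apply: ls0.
move=> [k [c [Z [SZ ->]]]].
apply: (big_ind (fun X => exists Y, dla G Y /\ X = P Y)).
- by exists 0; split; [apply: ls0 | rewrite (proj0 oP)].
- move=> a b [Ya [da ->]] [Yb [db ->]]; exists (Ya + Yb); split.
    exact: lsD.
  by rewrite (projD _ _ oP).
move=> i _; case: (SZ i) => h hG ->; exists (c i *: h); split.
  by apply: ls1; apply: nc_base.
by rewrite (projZ _ _ oP).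
Qed.
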